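(* Let $G=(\mathcal{N},\mathcal{A})$ be a directed graph with $m$ nodes and $n$ arcs, start node $s$ and end node $t$, let $\mathbf{A}\in\mathbb{R}^{(m-1)\times n}$ be its node–arc incidence matrix with the row of $t$ deleted, and let $\mathbf{b}\in\mathbb{R}^{m-1}$ have entry $+1$ at $s$ and $0$ elsewhere. Let $\hat{\mathbf{x}}^r_1,\dots,\hat{\mathbf{x}}^r_R$ satisfy $\mathbf{A}\hat{\mathbf{x}}^r_q=\mathbf{b}$, $\hat{\mathbf{x}}^r_q\ge\mathbf{0}$. Let $(\mathbf{c}^*,\mathbf{p}^*,\boldsymbol{\epsilon}^{*})$ be an optimal solution of $$\min_{\mathbf{c},\mathbf{p},\boldsymbol{\epsilon}}\ \sum_{q=1}^R \epsilon_q^2\quad\text{s.t.}\quad \mathbf{A}^\top\mathbf{p}\le \mathbf{c},\quad \mathbf{c}^\top\hat{\mathbf{x}}^r_q=\mathbf{b}^\top\mathbf{p}+\epsilon_q\ (q=1,\dots,R),\quad \|\mathbf{c}\|_\infty=1,\quad \mathbf{A}\mathbf{c}=\mathbf{0}.$$ Then the network $G$ with arc costs $\mathbf{c}^*$ contains no directed cycle of negative total cost.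
   Context: In the incidence matrix, the column of arc $(i,j)$ has $+1$ in row $i$ and $-1$ in row $j$ (rows other than $t$). The forward problem is $\min\{\mathbf{c}^\top\mathbf{x}:\mathbf{A}\mathbf{x}=\mathbf{b},\ \mathbf{x}\ge\mathbf{0}\}$, and $\mathbf{p}$ is the dual vector of its flow-balance constraints. *)

(* Defs.v *)
From HB Require Import structures.
From mathcomp Require Import all_boot all_order all_algebra.
Unset Printing Implicit Defensive.
Import Order.TTheory GRing.Theory Num.Theory.
Local Open Scope ring_scope.

(* A directed graph with node set 'I_m and arc set 'I_n; arc a goes from
   node (tl a) to node (hd a). *)

Definition rows {m : nat} (t : 'I_m) := {i : 'I_m | i != t}.

Section Network.
Variables (R : realFieldType) (m n : nat) (tl hd : 'I_n -> 'I_m).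

Definition inc (i : 'I_m) (a : 'I_n) : R :=
  (tl a == i)%:R - (hd a == i)%:R.

Definition incA {t : 'I_m} (i : rows t) (a : 'I_n) : R := inc (val i) a.

Definition bvec (s : 'I_m) {t : 'I_m} (i : rows t) : R := (val i == s)%:R.

Definition flow_feasible (s t : 'I_m) (x : 'I_n -> R) : Prop :=
  (forall i : rows t, \sum_(a < n) incA i a * x a = bvec s i) /\
  (forall a, 0 <= x a).

Definition inf_norm (c : 'I_n -> R) : R := \big[Num.max/0]_(a < n) `|c a|.

Definition io_feasible (s t : 'I_m) (Q : nat) (xhat : 'I_Q -> 'I_n -> R)
    (c : 'I_n -> R) (p : rows t -> R) (eps : 'I_Q -> R) : Prop :=
  [/\ (forall a : 'I_n, \sum_(i : rows t) incA i a * p i <= c a),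
      (forall q : 'I_Q, \sum_(a < n) c a * xhat q a
                        = \sum_(i : rows t) bvec s i * p i + eps q),
      inf_norm c = 1 &
      (forall i : rows t, \sum_(a < n) incA i a * c a = 0)].

Definition io_optimal (s t : 'I_m) (Q : nat) (xhat : 'I_Q -> 'I_n -> R)
    (c : 'I_n -> R) (p : rows t -> R) (eps : 'I_Q -> R) : Prop :=
  io_feasible s t Q xhat c p eps /\
  forall c' p' eps', io_feasible s t Q xhat c' p' eps' ->
    \sum_(q < Q) eps q ^+ 2 <= \sum_(q < Q) eps' q ^+ 2.

Definition dcycle (cyc : seq 'I_n) : bool :=
  if cyc is a :: rest then
    [&& path [rel x y | hd x == tl y] a rest,
        hd (last a rest) == tl a &
        uniq (map tl cyc)]
  else false.

Definition cycle_cost (c : 'I_n -> R) (cyc : seq 'I_n) : R :=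
  \sum_(a <- cyc) c a.

Definition no_negative_cycle (c : 'I_n -> R) : Prop :=
  forall cyc, dcycle cyc -> 0 <= cycle_cost c cyc.

End Network.

(* Main.v *)
Require Import Defs.
From HB Require Import structures.
From mathcomp Require Import all_boot all_order all_algebra.
Import Order.TTheory GRing.Theory Num.Theory.
Local Open Scope ring_scope.

Definition piext (R : realFieldType) (m : nat) (t : 'I_m) (p : rows t -> R)
  (i : 'I_m) : R :=
  if @insub _ (fun i : 'I_m => i != t) (rows t) i is Some r then p r else 0.

Arguments piext {R m t}.

Lemma sum_ind (R : realFieldType) (m : nat) (t : 'I_m) (p : rows t -> R)
  (j : 'I_m) :
  \sum_(i : rows t) (j == val i)%:R * p i = piext p j.
Proof.
rewrite /piext; case: insubP => [r H E|H].
  rewrite (bigD1 r) //= E eqxx mul1r big1 ?addr0 // => i Hi.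
  case: eqP => [E'|]; last by rewrite mul0r.
  by case/eqP: Hi; apply: val_inj; rewrite /= E E'.
rewrite big1 // => i _; case: eqP => [E|]; last by rewrite mul0r.
by move: (valP i) => /=; rewrite -E (negbTE H).
Qed.

Lemma row_sum (R : realFieldType) (m n : nat) (tl hd : 'I_n -> 'I_m)
  (t : 'I_m) (p : rows t -> R) a :
  \sum_(i : rows t) incA R m n tl hd i a * p i = piext p (tl a) - piext p (hd a).
Proof.
rewrite -!sum_ind -sumrB; apply: eq_bigr => i _.
by rewrite /incA /inc mulrBl.
Qed.

Lemma tele (R : realFieldType) (m n : nat) (tl hd : 'I_n -> 'I_m)
  (f : 'I_m -> R) rest a :
  path [rel x y | hd x == tl y] a rest ->
  \sum_(x <- a :: rest) (f (tl x) - f (hd x)) = f (tl a) - f (hd (last a rest)).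
Proof.
elim: rest a => [|b rest IH] a /=; first by rewrite big_seq1.
case/andP => /eqP E P; rewrite big_cons IH // E.
by rewrite addrA subrK.
Qed.

Theorem proposition1 (R : realFieldType) (m n : nat)
    (tl hd : 'I_n -> 'I_m) (s t : 'I_m) (hst : s != t)
    (Q : nat) (xhat : 'I_Q -> 'I_n -> R)
    (hx : forall q, flow_feasible R m n tl hd s t (xhat q))
    (cstar : 'I_n -> R) (pstar : rows t -> R) (epsstar : 'I_Q -> R)
    (hopt : io_optimal R m n tl hd s t Q xhat cstar pstar epsstar) :
  no_negative_cycle R m n tl hd cstar.
Proof.
case: hopt => [[Hc _ _ _] _] [|a rest] //= /and3P [P /eqP L _].
rewrite /cycle_cost.
apply: le_trans (_ : \sum_(x <- a :: rest) (piext pstar (tl x) - piext pstar (hd x)) <= _).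
  by rewrite (@tele _ _ _ tl hd _ rest a P) L subrr.
by apply: ler_sum => x _; rewrite -row_sum.
Qed.
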